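(* Let $\mathfrak n=W\oplus\mathfrak z$ be a finite-dimensional 2-step nilpotent Lie algebra over a field of characteristic zero which is of TST type and satisfies $(\Lambda^2\mathfrak n)^{\mathfrak n}=\Lambda^2\mathfrak z$. Then every Lie bialgebra structure $\delta$ on $\mathfrak n$ is of the following form: there are $\delta_{\mathfrak z}$, $D^1,\dots,D^m$, $\varphi$ satisfying conditions (a), (b), (c) below such that $\delta(z)=\delta_{\mathfrak z}(z)$ for $z\in\mathfrak z$ and $\delta(v)=\sum_iD^i(v)\wedge z_i+\varphi(v)$ for $v\in W$. (a) $\delta_{\mathfrak z}:\mathfrak z\to\Lambda^2\mathfrak z$ satisfies co-Jacobi; write $\delta_{\mathfrak z}(z_i)=\sum_{a<b}c_i^{ab}z_a\wedge z_b$. (b) $D^i:W\to W$ are linear with $[D^a,D^b]=\sum_ic_i^{ab}D^i$ for $a<b$, and for all $x,y\in W$: $\sum_iT_i(x)(y)\delta_{\mathfrak z}(z_i)=\sum_{i,j}(T_i(D^jx)(y)+T_i(x)(D^jy))z_i\wedge z_j$. (c) $\varphi:W\to\Lambda^2\mathfrak z$, $\varphi(v)=\sum_{a<b}\varphi_{ab}(v)z_a\wedge z_b$, is linear with $\sum_i\varphi(D^iv)\wedge z_i+\sum_{a<b}\varphi_{ab}(v)(\delta_{\mathfrak z}(z_a)\wedge z_b-z_a\wedge\delta_{\mathfrak z}(z_b))=0$ for all $v\in W$.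
   Context: $\mathfrak z$ is the center with basis $z_1,\dots,z_m$, $W$ a linear complement, $T_i:W\to W^*$ defined by $[v,w]=\sum_iT_i(v)(w)z_i$. $\mathfrak n$ is of TST type if the only linear $S:W^*\to W$ with $T_iST_k+T_kST_i=0$ for all $i,k$ is $S=0$. $(\Lambda^2\mathfrak n)^{\mathfrak n}$ is the space of invariants for $\mathrm{ad}_x(a\wedge b)=[x,a]\wedge b+a\wedge[x,b]$. Lie bialgebra structure: linear $\delta:\mathfrak n\to\Lambda^2\mathfrak n$ with co-Jacobi ($\delta(x_1)\wedge x_2-x_1\wedge\delta(x_2)=0$, Sweedler $\delta(x)=x_1\wedge x_2$) and $\delta[x,y]=[\delta x,y]+[x,\delta y]$. *)

(* Defs.v *)
From HB Require Import structures.
From mathcomp Require Import all_boot all_order all_algebra.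
Set Implicit Arguments. Unset Strict Implicit. Unset Printing Implicit Defensive.
Import GRing.Theory.
Local Open Scope ring_scope.

Section Defs.
Variable K : fieldType.

Definition ev k (s : 'I_k) : 'rV[K]_k := delta_mx 0 s.

(* Lambda^2 V is modelled by skew-symmetric k x k matrices, with
   a /\ b := a (x) b - b (x) a. *)
Definition wedge k (a b : 'rV[K]_k) : 'M[K]_k := a^T *m b - b^T *m a.
Definition is_alt2 k (A : 'M[K]_k) : Prop := A^T = - A.

(* Lambda^3 V is modelled by alternating 3-tensors (functions I_k^3 -> K);
   (A /\ x)_{pqr} for A in Lambda^2 V and x in V (= x /\ A). *)
Definition wedge21 k (A : 'M[K]_k) (x : 'rV[K]_k) (p q r : 'I_k) : K :=
  A p q * x 0 r + A q r * x 0 p + A r p * x 0 q.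

(* co-Jacobi: delta(x_1) /\ x_2 - x_1 /\ delta(x_2) = 0 where
   delta(x) = x_1 /\ x_2 (Sweedler); written in coordinates: for
   A = delta x = sum_{s,t} A_st e_s (x) e_t, the expression
   delta(x_1)/\x_2 - x_1/\delta(x_2) equals sum_{s,t} A_st delta(e_s) /\ e_t. *)
Definition coJacobi k (d : 'rV[K]_k -> 'M[K]_k) : Prop :=
  forall x p q r,
    \sum_(s < k) \sum_(t < k) d x s t * wedge21 (d (ev s)) (ev t) p q r = 0.

Definition is_lie_bracket k (br : 'rV[K]_k -> 'rV[K]_k -> 'rV[K]_k) : Prop :=
  [/\ forall a x y w, br (a *: x + y) w = a *: br x w + br y w,
      forall a x y w, br w (a *: x + y) = a *: br w x + br w y,
      forall x, br x x = 0 &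
      forall x y w, br x (br y w) + br y (br w x) + br w (br x y) = 0].

Definition two_step k (br : 'rV[K]_k -> 'rV[K]_k -> 'rV[K]_k) : Prop :=
  (forall x y w, br (br x y) w = 0) /\ exists x y, br x y <> 0.

(* ad_x on Lambda^2: ad_x(a /\ b) = [x,a] /\ b + a /\ [x,b], extended linearly *)
Definition adL k (br : 'rV[K]_k -> 'rV[K]_k -> 'rV[K]_k) (x : 'rV[K]_k)
  (A : 'M[K]_k) : 'M[K]_k :=
  \sum_(p < k) \sum_(q < k) A p q *: wedge (br x (ev p)) (ev q).

(* Lie bialgebra structure (linearity of d is imposed by its type) *)
Definition lie_bialgebra k (br : 'rV[K]_k -> 'rV[K]_k -> 'rV[K]_k)
  (d : 'rV[K]_k -> 'M[K]_k) : Prop :=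
  [/\ forall x, is_alt2 (d x),
      coJacobi d &
      forall x y, d (br x y) = adL br x (d y) - adL br y (d x)].

(* n = K^(n+m): first n coordinates span W, last m span z, z_i = embZ (ev i) *)
Definition embW n m (v : 'rV[K]_n) : 'rV[K]_(n + m) := row_mx v 0.
Definition embZ n m (z : 'rV[K]_m) : 'rV[K]_(n + m) := row_mx 0 z.
Definition embZ2 n m (C : 'M[K]_m) : 'M[K]_(n + m) := block_mx 0 0 0 C.

Definition center_is_z n m (br : 'rV[K]_(n + m) -> 'rV[K]_(n + m) -> 'rV[K]_(n + m)) : Prop :=
  forall x, (forall y, br x y = 0) <-> exists z : 'rV[K]_m, x = embZ n z.

(* T_i(v)(w) = z_i-coefficient of [v,w] for v, w in W *)
Definition Tcoef n m (br : 'rV[K]_(n + m) -> 'rV[K]_(n + m) -> 'rV[K]_(n + m))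
  (i : 'I_m) (v w : 'rV[K]_n) : K :=
  br (embW m v) (embW m w) 0 (rshift n i).

(* matrix of T_i : W -> W^* (row-vector convention: v |-> v *m Tmx i,
   W^* identified with K^n via the dual basis) *)
Definition Tmx n m (br : 'rV[K]_(n + m) -> 'rV[K]_(n + m) -> 'rV[K]_(n + m))
  (i : 'I_m) : 'M[K]_n :=
  \matrix_(p < n, q < n) Tcoef br i (ev p) (ev q).

(* TST type: the only linear S : W^* -> W (matrix S, phi |-> phi *m S) with
   T_i S T_k + T_k S T_i = 0 for all i, k is S = 0 *)
Definition TST n m (br : 'rV[K]_(n + m) -> 'rV[K]_(n + m) -> 'rV[K]_(n + m)) : Prop :=
  forall S : 'M[K]_n,
    (forall i k : 'I_m,
        Tmx br k *m S *m Tmx br i + Tmx br i *m S *m Tmx br k = 0) ->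
    S = 0.

Definition invariants_are_L2z n m
  (br : 'rV[K]_(n + m) -> 'rV[K]_(n + m) -> 'rV[K]_(n + m)) : Prop :=
  forall A : 'M[K]_(n + m), is_alt2 A ->
    ((forall x, adL br x A = 0) <-> exists C : 'M[K]_m, is_alt2 C /\ A = embZ2 n C).

End Defs.
Arguments ev {K k} s.
Arguments embW {K n} m v.
Arguments embZ {K} n {m} z.
Arguments embZ2 {K} n {m} C.

(* Main.v *)
Require Import Defs.
From HB Require Import structures.
From mathcomp Require Import all_boot all_order all_algebra ring.
Import GRing.Theory.
Local Open Scope ring_scope.
Set Implicit Arguments. Unset Strict Implicit.

Lemma sum_deltar (K : fieldType) k (F : 'I_k -> K) (Q : 'I_k) :
  \sum_(q < k) F q * (q == Q)%:R = F Q.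
Proof.
rewrite (bigD1 Q) //= eqxx mulr1 big1 ?addr0 // => q /negbTE ->; exact: mulr0.
Qed.

Lemma sum_deltal (K : fieldType) k (F : 'I_k -> K) (Q : 'I_k) :
  \sum_(q < k) (q == Q)%:R * F q = F Q.
Proof. by rewrite -[RHS](sum_deltar F); apply: eq_bigr => q _; rewrite mulrC. Qed.

Lemma evE (K : fieldType) k (s t : 'I_k) : (ev s : 'rV[K]_k) 0 t = (s == t)%:R.
Proof. by rewrite /ev mxE eqxx /= eq_sym. Qed.

Lemma wedgeE (K : fieldType) k (a b : 'rV[K]_k) P Q :
  wedge a b P Q = a 0 P * b 0 Q - b 0 P * a 0 Q.
Proof. by rewrite !mxE !big_ord1 !mxE. Qed.

Lemma adLE (K : fieldType) k (br : 'rV[K]_k -> 'rV[K]_k -> 'rV[K]_k) x A P Q :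
  adL br x A P Q = \sum_(p < k) (A p Q * br x (ev p) 0 P - A p P * br x (ev p) 0 Q).
Proof.
rewrite /adL summxE; apply: eq_bigr => p _; rewrite summxE.
under eq_bigr => q _ do rewrite mxE wedgeE !evE mulrBr.
rewrite sumrB; congr (_ - _).
  by rewrite -(sum_deltar (fun q => A p q * br x (ev p) 0 P)); apply: eq_bigr => q _; rewrite mulrA.
rewrite -(sum_deltar (fun q => A p q * br x (ev p) 0 Q)); apply: eq_bigr => q _.
by rewrite [_ * br _ _ _ _]mulrC mulrA.
Qed.

Lemma lin_decomp (K : fieldType) k (V : lmodType K) (f : 'rV[K]_k -> V) :
  (forall a x y, f (a *: x + y) = a *: f x + f y) ->
  forall v, f v = \sum_(s < k) v 0 s *: f (ev s).
Proof.
move=> hf v.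
have f0 : f 0 = 0.
  by have := hf (-1) 0 0; rewrite scaler0 addr0 scaleN1r addNr.
have fD : forall x y, f (x + y) = f x + f y by move=> x y; have := hf 1 x y; rewrite !scale1r.
rewrite {1}(row_sum_delta v) (@big_morph _ _ f 0 +%R 0 +%R fD f0); apply: eq_bigr => s _.
by rewrite -[_ *: 'e_s]addr0 hf f0 addr0.
Qed.

Definition dzf (K : fieldType) (n m : nat) (d : {linear 'rV[K]_(n + m) -> 'M[K]_(n + m)})
  (z : 'rV[K]_m) : 'M[K]_m := drsubmx (d (embZ n z)).

Lemma embZ_lin (K : fieldType) n m a (x y : 'rV[K]_m) :
  embZ n (a *: x + y) = a *: embZ n x + embZ n y.
Proof. by rewrite /embZ scale_row_mx add_row_mx scaler0 addr0. Qed.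

Lemma embW_lin (K : fieldType) n m a (x y : 'rV[K]_n) :
  embW m (a *: x + y) = a *: embW m x + embW m y.
Proof. by rewrite /embW scale_row_mx add_row_mx scaler0 addr0. Qed.

Fact dzf_lin K n m d : linear (@dzf K n m d).
Proof.
move=> a x y; rewrite /dzf embZ_lin linearP.
by apply/matrixP => i j; rewrite !mxE.
Qed.

HB.instance Definition _ (K : fieldType) n m d :=
  GRing.isLinear.Build K _ _ _ (@dzf K n m d) (@dzf_lin K n m d).

Definition phif (K : fieldType) (n m : nat) (d : {linear 'rV[K]_(n + m) -> 'M[K]_(n + m)})
  (v : 'rV[K]_n) : 'M[K]_m := drsubmx (d (embW m v)).

Fact phif_lin K n m d : linear (@phif K n m d).
Proof.
move=> a x y; rewrite /phif embW_lin linearP.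
by apply/matrixP => i j; rewrite !mxE.
Qed.

HB.instance Definition _ (K : fieldType) n m d :=
  GRing.isLinear.Build K _ _ _ (@phif K n m d) (@phif_lin K n m d).

Definition Dmx (K : fieldType) (n m : nat) (d : {linear 'rV[K]_(n + m) -> 'M[K]_(n + m)})
  (i : 'I_m) : 'M[K]_n :=
  \matrix_(s < n, p < n) d (embW m (ev s)) (lshift m p) (rshift n i).

Lemma ev_l (K : fieldType) n m (p : 'I_n) : ev (lshift m p) = embW m (ev p) :> 'rV[K]_(n + m).
Proof.
apply/matrixP => i j; rewrite ord1 evE.
case: (split_ordP j) => [q ->|q ->]; rewrite /embW ?row_mxEl ?row_mxEr ?evE ?mxE.
  by rewrite eq_lshift.
by rewrite eq_lrshift.
Qed.

Lemma ev_r (K : fieldType) n m (p : 'I_m) : ev (rshift n p) = embZ n (ev p) :> 'rV[K]_(n + m).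
Proof.
apply/matrixP => i j; rewrite ord1 evE.
case: (split_ordP j) => [q ->|q ->]; rewrite /embZ ?row_mxEl ?row_mxEr ?evE ?mxE.
  by rewrite eq_rlshift.
by rewrite eq_rshift.
Qed.

Section Main.
Variables (K : fieldType) (n m : nat).
Variable br : 'rV[K]_(n + m) -> 'rV[K]_(n + m) -> 'rV[K]_(n + m).
Hypothesis hchar : [pchar K] =i pred0.
Hypothesis hlie : is_lie_bracket br.
Hypothesis h2 : two_step br.
Hypothesis hz : center_is_z br.
Hypothesis hTST : TST br.
Hypothesis hinv : invariants_are_L2z br.
Variable d : {linear 'rV[K]_(n + m) -> 'M[K]_(n + m)}.
Hypothesis hd : lie_bialgebra br d.

Lemma brDl x y w : br (x + y) w = br x w + br y w.
Proof. by case: hlie => hl _ _ _; have := hl 1 x y w; rewrite !scale1r. Qed.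
Lemma brDr x y w : br w (x + y) = br w x + br w y.
Proof. by case: hlie => _ hl _ _; have := hl 1 x y w; rewrite !scale1r. Qed.
Lemma br0l w : br 0 w = 0.
Proof. have h := brDl 0 0 w; rewrite addr0 in h. by apply: (addrI (br 0 w)); rewrite addr0 -h. Qed.
Lemma br0r w : br w 0 = 0.
Proof. have h := brDr 0 0 w; rewrite addr0 in h. by apply: (addrI (br w 0)); rewrite addr0 -h. Qed.
Lemma brZl a x w : br (a *: x) w = a *: br x w.
Proof. by case: hlie => hl _ _ _; have := hl a x 0 w; rewrite !addr0 br0l addr0. Qed.
Lemma brZr a x w : br w (a *: x) = a *: br w x.
Proof. by case: hlie => _ hl _ _; have := hl a x 0 w; rewrite !addr0 br0r addr0. Qed.
Lemma br_skew x y : br x y = - br y x.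
Proof.
case: hlie => _ _ hxx _; have := hxx (x + y).
rewrite brDl !brDr !hxx add0r addr0 => /eqP; rewrite addr_eq0 => /eqP //.
Qed.
Lemma br_central x y : exists z, br x y = embZ n z.
Proof. by apply/hz => w; case: h2 => h _; exact: h. Qed.
Lemma br_lshift x y p : br x y 0 (lshift m p) = 0.
Proof. by case: (br_central x y) => z ->; rewrite /embZ row_mxEl mxE. Qed.
Lemma brZ_l z y : br (embZ n z) y = 0.
Proof. by move: y; apply/hz; exists z. Qed.
Lemma brZ_r z y : br y (embZ n z) = 0.
Proof. by rewrite br_skew brZ_l oppr0. Qed.

Lemma Tskew i v w : Tcoef br i v w = - Tcoef br i w v.
Proof. by rewrite /Tcoef br_skew mxE. Qed.

Lemma Tdecomp_r i v w : Tcoef br i v w = \sum_(p < n) w 0 p * Tcoef br i v (ev p).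
Proof.
have E := @lin_decomp _ _ _ (fun w => br (embW m v) (embW m w))
  (fun a x y => etrans (congr1 _ (embW_lin m a x y)) (etrans (brDr _ _ _) (congr1 (+%R^~ _) (brZr _ _ _)))) w.
rewrite /Tcoef /= in E *; rewrite E summxE; apply: eq_bigr => p _; by rewrite mxE.
Qed.

Lemma Tdecomp_l i v w : Tcoef br i v w = \sum_(p < n) v 0 p * Tcoef br i (ev p) w.
Proof.
have E := @lin_decomp _ _ _ (fun v => br (embW m v) (embW m w))
  (fun a x y => etrans (congr1 (br^~ _) (embW_lin m a x y)) (etrans (brDl _ _ _) (congr1 (+%R^~ _) (brZl _ _ _)))) v.
rewrite /Tcoef /= in E *; rewrite E summxE; apply: eq_bigr => p _; by rewrite mxE.
Qed.

Lemma d_skew x P Q : d x Q P = - d x P Q.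
Proof. by case: hd => hs _ _; have /matrixP/(_ P Q) := hs x; rewrite !mxE. Qed.

Lemma d_diag x P : d x P P = 0.
Proof.
have h := d_skew x P P; have : 2%:R * d x P P = 0 by rewrite mulr2n mulrDl mul1r {1}h addNr.
move/eqP; rewrite mulf_eq0 => /orP [|/eqP //].
by move/pcharf0P: hchar => ->.
Qed.

Lemma dW_decomp v : d (embW m v) = \sum_(s < n) v 0 s *: d (embW m (ev s)).
Proof. by apply: (@lin_decomp _ _ _ (fun v => d (embW m v))) => a x y /=; rewrite embW_lin linearP. Qed.

Lemma dZ_decomp v : d (embZ n v) = \sum_(s < m) v 0 s *: d (embZ n (ev s)).
Proof. by apply: (@lin_decomp _ _ _ (fun v => d (embZ n v))) => a x y /=; rewrite embZ_lin linearP. Qed.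

Lemma cocyc x y : d (br x y) = adL br x (d y) - adL br y (d x).
Proof. by case: hd. Qed.

Lemma adL_Z z A : adL br (embZ n z) A = 0.
Proof.
rewrite /adL big1 // => p _; rewrite big1 // => q _.
by rewrite brZ_l /wedge trmx0 mul0mx mulmx0 subr0 scaler0.
Qed.

Lemma dZ_block z : d (embZ n z) = embZ2 n (dzf d z).
Proof.
have inv : forall x, adL br x (d (embZ n z)) = 0.
  move=> x; have := cocyc x (embZ n z).
  by rewrite brZ_r linear0 adL_Z subr0 => <-.
have alt : is_alt2 (d (embZ n z)) by case: hd.
case: (proj1 (hinv alt) inv) => C [_ E].
by rewrite /dzf {2}E /embZ2 block_mxKdr.
Qed.



Lemma dZ_ll z p q : d (embZ n z) (lshift m p) (lshift m q) = 0.
Proof. by rewrite dZ_block /embZ2 block_mxEul mxE. Qed.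
Lemma dZ_lr z p q : d (embZ n z) (lshift m p) (rshift n q) = 0.
Proof. by rewrite dZ_block /embZ2 block_mxEur mxE. Qed.
Lemma dZ_rl z p q : d (embZ n z) (rshift n p) (lshift m q) = 0.
Proof. by rewrite dZ_block /embZ2 block_mxEdl mxE. Qed.
Lemma dZ_rr z p q : d (embZ n z) (rshift n p) (rshift n q) = dzf d z p q.
Proof. by rewrite dZ_block /embZ2 block_mxEdr. Qed.

Lemma adLW v X P Q : adL br (embW m v) X P Q =
  \sum_(p < n) (X (lshift m p) Q * br (embW m v) (embW m (ev p)) 0 P
               - X (lshift m p) P * br (embW m v) (embW m (ev p)) 0 Q).
Proof.
rewrite adLE big_split_ord /= [X in _ + X]big1 ?addr0.
  by apply: eq_bigr => p _; rewrite ev_l.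
by move=> j _; rewrite ev_r brZ_r !mxE !mulr0 subrr.
Qed.

Lemma sym_cond v w i q :
  \sum_(p < n) Tcoef br i v (ev p) * d (embW m w) (lshift m p) (lshift m q)
  = \sum_(p < n) Tcoef br i w (ev p) * d (embW m v) (lshift m p) (lshift m q).
Proof.
have := cocyc (embW m v) (embW m w).
case: (br_central (embW m v) (embW m w)) => z ->.
move/matrixP/(_ (lshift m q) (rshift n i)); rewrite dZ_lr !mxE !adLW.
under eq_bigr => p _ do rewrite br_lshift mulr0 sub0r.
under [X in _ - X]eq_bigr => p _ do rewrite br_lshift mulr0 sub0r.
rewrite !sumrN opprK => /eqP; rewrite eq_sym addrC subr_eq0 => /eqP h.
rewrite /Tcoef; symmetry.
rewrite (eq_bigr (fun p => d (embW m v) (lshift m p) (lshift m q) * br (embW m w) (embW m (ev p)) 0 (rshift n i))); last by move=> p _; rewrite mulrC.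
rewrite h; apply: eq_bigr => p _; exact: mulrC.
Qed.

Local Notation al u p q := (d (embW m u) (lshift m p) (lshift m q)).

Definition G u k x i y := \sum_(p < n) \sum_(q < n)
  (Tcoef br k x (ev p) * al u p q) * Tcoef br i y (ev q).

Lemma Gswap u k x i y : G u k x i y = - G y i u k x.
Proof.
rewrite /G.
have E : forall p, \sum_(q < n) Tcoef br k x (ev p) * al u p q * Tcoef br i y (ev q)
   = - (Tcoef br k x (ev p) * \sum_(q < n) Tcoef br i y (ev q) * al u q p).
  move=> p; rewrite mulr_sumr -sumrN; apply: eq_bigr => q _.
  rewrite (d_skew _ (lshift m q) (lshift m p)); ring.
rewrite (eq_bigr _ (fun p _ => E p)) sumrN; congr (- _).
under eq_bigr => p _ do rewrite (sym_cond y u i p) mulr_sumr.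
rewrite exchange_big; apply: eq_bigr => q _; apply: eq_bigr => p _; ring.
Qed.

Lemma Ganti u k x i y : G u k x i y = - G u i x k y.
Proof. by rewrite Gswap (Gswap y) (Gswap x) opprK. Qed.

Lemma dWll u p q : al u p q = 0.
Proof.
pose S := \matrix_(p < n, q < n) al u p q.
have M : forall k i x y, (Tmx br k *m S *m Tmx br i) x y = - G u k (ev x) i (ev y).
  move=> k i x y; rewrite mxE /G exchange_big -sumrN; apply: eq_bigr => q0 _.
  rewrite mxE mulr_suml -sumrN; apply: eq_bigr => p' _; rewrite !mxE.
  rewrite (Tskew i (ev q0) (ev y)); ring.
have HS : S = 0.
  apply: hTST => i k; apply/matrixP => x y.
  by rewrite [in LHS]mxE !M (Ganti u k) opprK subrr mxE.
by move/matrixP: HS => /(_ p q); rewrite !mxE.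
Qed.

Lemma vD v i p : (v *m Dmx d i) 0 p = d (embW m v) (lshift m p) (rshift n i).
Proof.
rewrite mxE (dW_decomp v) summxE; apply: eq_bigr => s _; by rewrite !mxE.
Qed.

Lemma z0 k l (i : 'I_k) (j : 'I_l) : (0 : 'M[K]_(k, l)) i j = 0.
Proof. by rewrite mxE. Qed.

Lemma final5 v : d (embW m v) =
  \sum_(i < m) wedge (embW m (v *m Dmx d i)) (embZ n (ev i)) + embZ2 n (phif d v).
Proof.
apply/matrixP => P Q; rewrite mxE summxE.
case: (split_ordP P) => [p ->|a ->]; case: (split_ordP Q) => [q ->|b ->].
- rewrite dWll /embZ2 block_mxEul z0 addr0 big1 // => i _.
  by rewrite wedgeE /embW /embZ !row_mxEl !z0 mulr0 mul0r subrr.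
- rewrite /embZ2 block_mxEur z0 addr0 -vD.
  rewrite (eq_bigr (fun i => (v *m Dmx d i) 0 p * (i == b)%:R)); first by rewrite sum_deltar.
  move=> i _; rewrite wedgeE /embW /embZ !row_mxEl !row_mxEr evE.
  by rewrite z0 mul0r subr0.
- rewrite /embZ2 block_mxEdl z0 addr0 d_skew -vD -(sum_deltal (fun i => (v *m Dmx d i) 0 q) a) -sumrN.
  apply: eq_bigr => i _; rewrite wedgeE /embW /embZ !row_mxEl !row_mxEr evE.
  by rewrite z0 mul0r sub0r.
- rewrite /embZ2 block_mxEdr big1 ?add0r; first by rewrite /phif !mxE.
  by move=> i _; rewrite wedgeE /embW /embZ !row_mxEr !z0 mul0r mulr0 subrr.
Qed.

Lemma partA z : is_alt2 (dzf d z).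
Proof. by apply/matrixP => a b; rewrite /dzf !mxE d_skew. Qed.

Lemma cj_simpl k (X : 'M[K]_k) (Y : 'I_k -> 'M[K]_k) P Q R :
  \sum_(s < k) \sum_(t < k) X s t * wedge21 (Y s) (ev t) P Q R =
  \sum_(s < k) (X s R * Y s P Q + X s P * Y s Q R + X s Q * Y s R P).
Proof.
apply: eq_bigr => s _; rewrite /wedge21.
under eq_bigr => t _ do rewrite !evE !mulrDr.
rewrite !big_split /=.
have h : forall c (R' : 'I_k), \sum_(t < k) X s t * (c * (t == R')%:R) = X s R' * c.
  move=> c R'; rewrite -(sum_deltar (fun t => X s t * c)); apply: eq_bigr => t _; ring.
by rewrite !h.
Qed.

Lemma coJ : coJacobi d.
Proof. by case: hd. Qed.

Lemma partA2 : coJacobi (dzf d).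
Proof.
move=> z p q r.
have := coJ (embZ n z) (rshift n p) (rshift n q) (rshift n r).
rewrite (cj_simpl _ (fun s => d (ev s))) (cj_simpl _ (fun s => dzf d (ev s))) /=.
rewrite big_split_ord /= big1 ?add0r; last by move=> u _; rewrite !dZ_lr !mul0r !addr0.
move=> h; apply: (etrans _ h); apply: eq_bigr => j _; by rewrite ev_r !dZ_rr.
Qed.

Lemma partB1 s p a b : (Dmx d b *m Dmx d a - Dmx d a *m Dmx d b) s p
   = (\sum_(i < m) dzf d (ev i) a b *: Dmx d i) s p.
Proof.
have := coJ (embW m (ev s)) (lshift m p) (rshift n a) (rshift n b).
rewrite (cj_simpl _ (fun s => d (ev s))) /= big_split_ord /=.
under eq_bigr => u _ do rewrite ev_l dWll mul0r addr0 (d_skew (embW m (ev u)) (lshift m p) (rshift n b)).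
under [X in _ + X]eq_bigr => j _ do rewrite ev_r dZ_lr dZ_rl dZ_rr !mulr0 add0r addr0 (d_skew _ (lshift m p) (rshift n j)).
rewrite !mxE; move/eqP; rewrite addr_eq0 => /eqP h.
have E1 : \sum_j Dmx d b s j * Dmx d a j p - \sum_j Dmx d a s j * Dmx d b j p =
  \sum_(u < n)
     (d (embW m (ev s)) (lshift m u) (rshift n b) *
      d (embW m (ev u)) (lshift m p) (rshift n a) +
      d (embW m (ev s)) (lshift m u) (rshift n a) *
      - d (embW m (ev u)) (lshift m p) (rshift n b)).
  by rewrite -sumrB; apply: eq_bigr => u _; rewrite !mxE; ring.
rewrite E1 h summxE -sumrN; apply: eq_bigr => j _; rewrite !mxE; ring.
Qed.

Lemma wedge_sum k (c : 'I_k -> 'I_k -> K) a b :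
  (\sum_(i < k) \sum_(j < k) c i j *: wedge (ev i) (ev j)) a b = c a b - c b a.
Proof.
rewrite summxE.
have E : forall i, (\sum_(j < k) c i j *: wedge (ev i) (ev j)) a b
   = c i b * (i == a)%:R - c i a * (i == b)%:R.
  move=> i; rewrite summxE.
  under eq_bigr => j _ do rewrite mxE wedgeE !evE mulrBr.
  rewrite sumrB -(sum_deltar (fun j => c i j * (i == a)%:R) b)
     -(sum_deltar (fun j => c i j * (i == b)%:R) a).
  by congr (_ - _); apply: eq_bigr => j _; ring.
rewrite (eq_bigr _ (fun i _ => E i)) sumrB.
by rewrite (sum_deltar (fun i => c i b)) (sum_deltar (fun i => c i a)).
Qed.

Lemma partB2 x y :
  \sum_(i < m) Tcoef br i x y *: dzf d (ev i)
  = \sum_(i < m) \sum_(j < m)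
      (Tcoef br i (x *m Dmx d j) y + Tcoef br i x (y *m Dmx d j)) *: wedge (ev i) (ev j).
Proof.
apply/matrixP => a b; rewrite wedge_sum.
have := cocyc (embW m x) (embW m y); move/matrixP/(_ (rshift n a) (rshift n b)).
case: (br_central (embW m x) (embW m y)) => z Ez.
rewrite Ez dZ_decomp summxE !mxE !adLW.
under eq_bigr => i _ do rewrite mxE dZ_rr.
under [X in _ = X - _]eq_bigr => p _ do rewrite -!vD.
under [X in _ = _ - X]eq_bigr => p _ do rewrite -!vD.
move=> h; rewrite summxE.
under eq_bigr => i _ do rewrite mxE /Tcoef Ez /embZ row_mxEr.
rewrite h.
rewrite (Tskew a (x *m Dmx d b) y) (Tskew b (x *m Dmx d a) y).
rewrite (Tdecomp_r a x (y *m Dmx d b)) (Tdecomp_r b x (y *m Dmx d a)).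
rewrite (Tdecomp_r a y (x *m Dmx d b)) (Tdecomp_r b y (x *m Dmx d a)).
rewrite /Tcoef !sumrB; ring.
Qed.

Lemma pair_sum k (phi : 'M[K]_k) (g : 'I_k -> 'I_k -> K) :
  (forall a b, phi b a = - phi a b) -> (forall a, phi a a = 0) ->
  \sum_(a < k) \sum_(b < k | (a < b)%N) phi a b * (g a b - g b a)
  = \sum_(a < k) \sum_(b < k) phi a b * g a b.
Proof.
move=> hs h0.
have E : \sum_(a < k) \sum_(b < k | (a < b)%N) phi a b * g b a
        = - \sum_(a < k) \sum_(b < k | ~~ (a < b)%N) phi a b * g a b.
  rewrite -sumrN.
  under eq_bigr => a _ do rewrite big_mkcond /=.
  under [RHS]eq_bigr => a _ do rewrite -sumrN big_mkcond /=.
  rewrite [RHS]exchange_big; apply: eq_bigr => a _; apply: eq_bigr => b _.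
  case: (ltngtP a b) => [hab|hba|hab] /=.
  - by rewrite (hs a b) mulNr opprK.
  - by [].
  - have -> : b = a by apply: val_inj.
    by rewrite h0 mul0r oppr0.
rewrite (eq_bigr (fun a : 'I_k => \sum_(b < k | (a < b)%N) phi a b * g a b
   - \sum_(b < k | (a < b)%N) phi a b * g b a)); last first.
  by move=> a _; rewrite -sumrB; apply: eq_bigr => b _; rewrite mulrBr.
rewrite sumrB E opprK -big_split /=.
by apply: eq_bigr => a _; rewrite [X in _ = X](bigID (fun b : 'I_k => (a < b)%N)) /=.
Qed.

Lemma wsum k (F : 'I_k -> 'M[K]_k) p q r :
  \sum_(i < k) wedge21 (F i) (ev i) p q r = F r p q + F p q r + F q r p.
Proof.
rewrite /wedge21; under eq_bigr => i _ do rewrite !evE.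
rewrite !big_split /=.
by rewrite (sum_deltar (fun i => F i p q)) (sum_deltar (fun i => F i q r)) (sum_deltar (fun i => F i r p)).
Qed.

Lemma dWentry (w : 'rV[K]_n) P Q : \sum_(u < n) w 0 u * d (embW m (ev u)) P Q = d (embW m w) P Q.
Proof. by rewrite (dW_decomp w) summxE; apply: eq_bigr => u _; rewrite mxE. Qed.

Lemma partC v p q r :
  \sum_(i < m) wedge21 (phif d (v *m Dmx d i)) (ev i) p q r
  + \sum_(a < m) \sum_(b < m | (a < b)%N)
        phif d v a b * (wedge21 (dzf d (ev a)) (ev b) p q r
                       - wedge21 (dzf d (ev b)) (ev a) p q r) = 0.
Proof.
rewrite wsum (@pair_sum _ (phif d v) (fun a b => wedge21 (dzf d (ev a)) (ev b) p q r)); first last.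
- by move=> a; rewrite /phif !mxE d_diag.
- by move=> a b; rewrite /phif !mxE d_skew.
rewrite (cj_simpl _ (fun a => dzf d (ev a))) /=.
have := coJ (embW m v) (rshift n p) (rshift n q) (rshift n r).
rewrite (cj_simpl _ (fun s => d (ev s))) /= big_split_ord /=.
under eq_bigr => u _ do rewrite ev_l -!vD.
rewrite !big_split /= !dWentry.
under eq_bigr => j _ do rewrite ev_r !dZ_rr.
move=> h; rewrite -[RHS]h /phif.
congr (_ + (_ + _ + _)). all: try (apply: eq_bigr => i _; by rewrite ?ev_r ?dZ_rr !mxE). by rewrite !mxE.
Qed.

End Main.

Unset Implicit Arguments.

Theorem mainTheorem7 (K : fieldType) (n m : nat)
  (br : 'rV[K]_(n + m) -> 'rV[K]_(n + m) -> 'rV[K]_(n + m))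
  (hchar : [pchar K] =i pred0)
  (hlie : is_lie_bracket br)
  (h2 : two_step br)
  (hz : center_is_z br)
  (hTST : TST br)
  (hinv : invariants_are_L2z br)
  (d : {linear 'rV[K]_(n + m) -> 'M[K]_(n + m)})
  (hd : lie_bialgebra br d) :
  exists (dz : {linear 'rV[K]_m -> 'M[K]_m}) (D : 'I_m -> 'M[K]_n)
         (phi : {linear 'rV[K]_n -> 'M[K]_m}),
    [/\ (* (a) *)
        (forall z : 'rV[K]_m, is_alt2 (dz z)) /\ coJacobi dz,
        (* (b) [D^a,D^b] = D^a o D^b - D^b o D^a, maps acting on row vectors *)
        (forall a b : 'I_m, (a < b)%N ->
            D b *m D a - D a *m D b = \sum_(i < m) dz (ev i) a b *: D i)
        /\ (forall x y : 'rV[K]_n,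
            \sum_(i < m) Tcoef br i x y *: dz (ev i)
            = \sum_(i < m) \sum_(j < m)
                (Tcoef br i (x *m D j) y + Tcoef br i x (y *m D j)) *:
                  wedge (ev i) (ev j)),
        (* (c) *)
        (forall v : 'rV[K]_n, is_alt2 (phi v)) /\
        (forall (v : 'rV[K]_n) (p q r : 'I_m),
            \sum_(i < m) wedge21 (phi (v *m D i)) (ev i) p q r
            + \sum_(a < m) \sum_(b < m | (a < b)%N)
                phi v a b * (wedge21 (dz (ev a)) (ev b) p q r
                             - wedge21 (dz (ev b)) (ev a) p q r) = 0),
        forall z : 'rV[K]_m, d (embZ n z) = embZ2 n (dz z) &
        forall v : 'rV[K]_n,
          d (embW m v) = \sum_(i < m) wedge (embW m (v *m D i)) (embZ n (ev i))
                         + embZ2 n (phi v)].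
Proof.
exists (@dzf K n m d : {linear _ -> _}), (@Dmx K n m d), (@phif K n m d : {linear _ -> _}).
split.
- split; [exact: (partA hd) | exact: (partA2 hlie hz hinv hd)].
- split; [move=> a b _; apply/matrixP => s p; exact: (partB1 hlie h2 hz hTST hinv hd)
         | move=> x y; exact: (partB2 hlie h2 hz hinv hd)].
- split; [move=> v; apply/matrixP => a b; rewrite /phif !mxE; exact: (d_skew hd)
         | exact: (partC hchar hlie hz hinv hd)].
- exact: (dZ_block hlie hz hinv hd).
- exact: (final5 hlie h2 hz hTST hinv hd).
Qed.
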